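(* Let $n\ge 2$. For every $T_1,T_2\in\mathcal{T}_n$, $\mathit{TD}'(T_1,T_2)$ is an even integer smaller than $2n-2$.
   Context: A phylogenetic tree is a finite rooted tree (arcs directed away from the root) with no node of outdegree $1$, whose leaves are injectively labeled. $\mathcal{T}_n$ denotes the set of phylogenetic trees with $n$ leaves labeled $1,\dots,n$, up to label-preserving isomorphism. Internal nodes are the non-leaf nodes; $\mathcal{L}(T)$ is the set of leaves. The height of a node is the length of a longest directed path from it to a leaf. The bottom-up ordering of $T=(V,E)\in\mathcal{T}_n$ is the unique injective map $\ell:V\to\{1,\dots,|V|\}$ such that: (a) for a leaf $v$, $\ell(v)$ is its label; (b) if $\mathrm{height}(u)<\mathrm{height}(v)$ then $\ell(u)<\ell(v)$; (c) if $0<\mathrm{height}(u)=\mathrm{height}(v)$ and $\min\{\ell(x): x \text{ child of } u\}<\min\{\ell(x): x\text{ child of } v\}$ then $\ell(u)<\ell(v)$. For a subset $S=\{i_1<\dots<i_k\}$ with $k\ge 2$, $\kappa(S)$ is the cyclic permutation $(i_1,i_2,\dots,i_k)$. The matching permutation of $T$ is $\pi(T)=\prod_{u\in V\setminus\mathcal{L}(T)}\kappa(\ell(\mathrm{children}(u)))$, regarded as an element of $\mathfrak{S}_{2n-2}$ fixing $|V|,\dots,2n-2$. Permutations are composed right to left. $\mathit{TD}'(T_1,T_2)$ is the least number of transpositions whose product is $\pi(T_2)^{-1}\pi(T_1)$ (zero if this is the identity). *)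

(* Defs.v *)
From mathcomp Require Import all_boot all_order all_fingroup.
From Stdlib Require Import ClassicalEpsilon.
Set Implicit Arguments. Unset Strict Implicit. Unset Printing Implicit Defensive.

Section Trees.
Variables (V : finType) (par : V -> option V).

Definition children (u : V) : {set V} := [set v | par v == Some u].
Definition is_leaf (u : V) : bool := children u == set0.

(* height: length of a longest directed path from v to a leaf.
   hgt f v computes it with recursion depth f; any directed path in a
   tree on #|V| vertices has fewer than #|V| arcs, so fuel #|V| suffices. *)
Fixpoint hgt (f : nat) (v : V) : nat :=
  if f is f'.+1 then \max_(c in children v) (hgt f' c).+1 else 0.
Definition height (v : V) : nat := hgt #|V| v.
End Trees.

(* A phylogenetic tree with n leaves labelled 1..n: a finite rooted tree
   (arcs directed away from the root, encoded by the parent map), with no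
   node of outdegree 1, and an injective labelling of its leaves onto
   {1,...,n}.  (Labels of internal nodes are irrelevant.) *)
Record phylo_tree (n : nat) := PhyloTree {
  pt_V : finType;
  pt_par : pt_V -> option pt_V;
  pt_lab : pt_V -> nat;
  pt_root : exists r, forall v, pt_par v = None <-> v = r;
  pt_acyclic : forall v, exists k, iter k (obind pt_par) (Some v) = None;
  pt_no_outdeg1 : forall u, #|children pt_par u| != 1;
  pt_lab_range : forall v, is_leaf pt_par v -> 1 <= pt_lab v <= n;
  pt_lab_inj : {in is_leaf pt_par &, injective pt_lab};
  pt_nleaves : #|[set v | is_leaf pt_par v]| = n
}.
Arguments pt_V {n} p.
Arguments pt_par {n} p _.
Arguments pt_lab {n} p _.

Section BottomUp.
Variables (n : nat) (T : phylo_tree n).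

Definition min_child_lt (l : pt_V T -> nat) (u v : pt_V T) : Prop :=
  exists2 x, x \in children (pt_par T) u & forall y, y \in children (pt_par T) v -> l x < l y.

Definition is_bottom_up (l : pt_V T -> nat) : Prop :=
  [/\ injective l,
      (forall v, 1 <= l v <= #|pt_V T|),
      (forall v, is_leaf (pt_par T) v -> l v = pt_lab T v),
      (forall u v, height (pt_par T) u < height (pt_par T) v -> l u < l v) &
      (forall u v, 0 < height (pt_par T) u -> height (pt_par T) u = height (pt_par T) v -> min_child_lt l u v -> l u < l v)].

(* "the unique injective map such that ..." : definite description *)
Definition bottom_up : pt_V T -> nat :=
  epsilon (inhabits (fun _ => 0)) is_bottom_up.
End BottomUp.
Arguments bottom_up {n} T _.
Arguments is_bottom_up {n} T l.
Arguments min_child_lt {n} T l u v.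

(* For S = {i_1 < ... < i_k}, kappa S maps i_j to i_{j+1} and i_k to i_1. *)
Definition kappa_seq (N : nat) (S : {set 'I_N}) : seq 'I_N :=
  sort (fun a b : 'I_N => (a <= b)%N) (enum S).

Lemma kappa_seq_uniq N (S : {set 'I_N}) : uniq (kappa_seq S).
Proof. by rewrite sort_uniq enum_uniq. Qed.

Definition kappa (N : nat) (S : {set 'I_N}) : {perm 'I_N} :=
  perm (can_inj (prev_next (kappa_seq_uniq S))).

(* Points 1..2n-2 are represented by the ordinals 0..2n-3 of 'I_(2n-2)
   (point j is the ordinal j-1). *)
Definition child_labels (n : nat) (T : phylo_tree n) (u : pt_V T)
  : {set 'I_(2 * n - 2)} :=
  [set j : 'I_(2 * n - 2) |
     [exists c in children (pt_par T) u, bottom_up T c == j.+1]].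

Arguments child_labels {n} T u.

(* pi(T) = prod over internal nodes u of kappa(l(children(u))).  These cycles
   are pairwise disjoint, so the order of the product is immaterial. *)
Definition matching_perm (n : nat) (T : phylo_tree n) : {perm 'I_(2 * n - 2)} :=
  (\prod_(u : pt_V T | ~~ is_leaf (pt_par T) u) kappa (child_labels T u))%g.

Definition is_prod_transp (N : nat) (s : {perm 'I_N}) (k : nat) : bool :=
  [exists ts : k.-tuple ('I_N * 'I_N),
     all dpair ts && (s == \prod_(t <- ts) tperm t.1 t.2)%g].

Lemma is_prod_transp_ex N (s : {perm 'I_N}) : exists k, is_prod_transp s k.
Proof.
have [ts -> dts] := prod_tpermP s.
exists (size ts); apply/existsP; exists (in_tuple ts); by rewrite dts eqxx.
Qed.

Definition min_transp (N : nat) (s : {perm 'I_N}) : nat :=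
  ex_minn (is_prod_transp_ex s).

Arguments matching_perm {n} T.

(* TD'(T1,T2) = least number of transpositions with product pi(T2)^-1 pi(T1)
   (composition right to left, i.e. x |-> pi(T2)^-1 (pi(T1) x)); in
   MathComp's {perm} group, (p * q) x = q (p x), so this is pi T1 * (pi T2)^-1. *)
Definition TD' (n : nat) (T1 T2 : phylo_tree n) : nat :=
  min_transp (matching_perm T1 * (matching_perm T2)^-1)%g.

(* Main.v *)
Require Import Defs.
From mathcomp Require Import all_boot all_order all_fingroup.
From mathcomp Require Import zify.
From Stdlib Require Import ClassicalEpsilon.
Set Implicit Arguments. Unset Strict Implicit. Unset Printing Implicit Defensive.

Section Height.
Variables (n : nat) (T : phylo_tree n).
Local Notation V := (pt_V T).
Local Notation par := (pt_par T).

Lemma hgtS f v : hgt par f.+1 v = \max_(c in children par v) (hgt par f c).+1.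
Proof. by []. Qed.

Lemma hgt_le f v : hgt par f v <= f.
Proof.
elim: f v => [|f IH] v //=; apply/bigmax_leqP => c _; exact: IH.
Qed.

Lemma hgt_mono f v : hgt par f v <= hgt par f.+1 v.
Proof.
elim: f v => [|f IH] v //=; apply/bigmax_leqP => c cin.
apply: (leq_trans _ (leq_bigmax_cond c cin)); by rewrite ltnS IH.
Qed.

Lemma hgt_jump f v : hgt par f v < hgt par f.+1 v -> hgt par f.+1 v = f.+1.
Proof.
elim: f v => [|f IH] v H; apply/eqP; rewrite eqn_leq hgt_le //.
rewrite hgtS.
case: (boolP [exists c in children par v, hgt par f c < hgt par f.+1 c]) =>
  [/existsP[c /andP[cin hc]]|/existsPn hn].
  apply: (leq_trans _ (leq_bigmax_cond c cin)); by rewrite (IH _ hc).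
exfalso; move: H; rewrite [hgt par f.+2 v]hgtS [hgt par f.+1 v]hgtS ltnNge => /negP; apply.
apply/bigmax_leqP => c cin; apply: (leq_trans _ (leq_bigmax_cond c cin)).
by move: (hn c); rewrite cin /= -leqNgt.
Qed.

Lemma acyc_b v : exists k, iter k (obind par) (Some v) == None.
Proof. by have [k Hk] := pt_acyclic v; exists k; rewrite Hk. Qed.

Definition depth v := ex_minn (acyc_b v).

Lemma depth_child c u : par c = Some u -> depth u < depth c.
Proof.
move=> pc; rewrite /depth.
case: (ex_minnP (acyc_b c)) => d Hd _; case: (ex_minnP (acyc_b u)) => e _ He.
case: d Hd => [//|d] Hd; rewrite ltnS He //.
by rewrite iterSr /= pc in Hd.
Qed.

Lemma desc_card k v : hgt par k v = k -> k < #|[set w | depth v <= depth w]|.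
Proof.
elim: k v => [|k IH] v H.
  by apply/card_gt0P; exists v; rewrite inE.
case: (boolP [exists c in children par v, hgt par k c == k]) =>
  [/existsP[c /andP[cin /eqP Hc]]|/existsPn hn]; last first.
  have: \max_(c in children par v) (hgt par k c).+1 <= k.
    apply/bigmax_leqP => c cin; have := hn c; rewrite cin /= => ne.
    by rewrite ltn_neqAle ne hgt_le.
  by rewrite -hgtS H ltnn.
have := IH _ Hc.
have pc : par c = Some v by move: cin; rewrite inE => /eqP.
have dvc := depth_child pc.
move=> h; rewrite (cardsD1 v [set w | depth v <= depth w]) inE leqnn add1n ltnS; apply: (leq_trans h).
apply: subset_leq_card; apply/subsetP => w; rewrite !inE => dw.
apply/andP; split; last by apply: ltnW (leq_trans dvc dw).
by apply/eqP => ewv; move: dw; rewrite ewv leqNgt dvc.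
Qed.

Lemma card_V_gt0 (v : V) : 0 < #|V|.
Proof. by apply/card_gt0P; exists v. Qed.

Lemma hgt_stable v : hgt par #|V| v = hgt par #|V|.-1 v.
Proof.
have := card_V_gt0 v.
have := @max_card V (mem [set w | depth v <= depth w]).
move: (@desc_card #|V|); case: #|V| => [//|f] dc mc _ /=.
apply/eqP; rewrite eqn_leq hgt_mono andbT leqNgt; apply/negP => J.
by have := dc _ (hgt_jump J); rewrite ltnNge mc.
Qed.


Lemma height_child c u : par c = Some u -> height par c < height par u.
Proof.
move=> pc; rewrite /height (hgt_stable c).
have := card_V_gt0 c; case: #|V| => // f _; rewrite hgtS /=.
by apply: (leq_trans _ (leq_bigmax_cond c _)); rewrite // inE pc.
Qed.

Lemma height_leaf v : is_leaf par v -> height par v = 0.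
Proof.
rewrite /is_leaf /height => /eqP e; case: #|V| => // f.
by rewrite hgtS e big_set0.
Qed.

Lemma height_internal v : ~~ is_leaf par v -> 0 < height par v.
Proof.
rewrite /is_leaf => /set0Pn [c cin]; rewrite /height.
have := card_V_gt0 v; case: #|V| => // f _; rewrite hgtS.
exact: (leq_trans _ (leq_bigmax_cond c cin)).
Qed.

Lemma height_root r : (forall v, par v = None <-> v = r) ->
  forall v, v != r -> height par v < height par r.
Proof.
move=> hr v; have [m] := ubnP (depth v); elim: m v => [//|m IH] v dv vr.
case E: (par v) => [u|]; last by rewrite (proj1 (hr v) E) eqxx in vr.
have du := depth_child E; have hvu := height_child E.
have [ur0|ur] := eqVneq u r; first by rewrite -ur0.
apply: (ltn_trans hvu); apply: IH ur; exact: leq_trans du _.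
Qed.

Lemma card_children u : #|children par u| = \sum_v (par v == Some u : nat).
Proof.
rewrite -sum1_card big_mkcond /=; apply: eq_bigr => v _.
by rewrite inE; case: (_ == _).
Qed.

Lemma sum_children r : (forall v, par v = None <-> v = r) ->
  \sum_(u : V) #|children par u| = #|V|.-1.
Proof.
move=> hr.
under eq_bigr => u _ do rewrite card_children.
rewrite exchange_big /=.
rewrite -(cardC1 r) -sum1_card [RHS]big_mkcond /=.
apply: eq_bigr => v _; rewrite !inE.
case E: (par v) => [w|].
  rewrite (bigD1 w) //= eqxx big1 => [|u /negPf uw]; last first.
    by case: eqP => // [[]] wu; move: uw; rewrite wu eqxx.
  have -> : v != r by apply/eqP => vr; move: (proj2 (hr v) vr); rewrite E.
  by [].
rewrite big1 // (proj1 (hr v) E) eqxx; by [].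
Qed.

Lemma card_leaves_internal :
  \sum_(u : V | is_leaf par u) 1 = n /\ \sum_(u : V | ~~ is_leaf par u) 1 = #|V| - n.
Proof.
have h1 : \sum_(u : V | is_leaf par u) 1 = n by rewrite sum1dep_card (pt_nleaves T).
split=> //.
have := sum1_card (mem V); rewrite (bigID (fun u => is_leaf par u)) /= h1.
by move=> <-; rewrite addKn.
Qed.


Lemma n_le_V : n <= #|V|.
Proof. by rewrite -{1}(pt_nleaves T) max_card. Qed.

Lemma sum_internal r : (forall v, par v = None <-> v = r) ->
  \sum_(u | ~~ is_leaf par u) (#|children par u|).-1 = n.-1 /\ #|V| <= (2*n).-1.
Proof.
move=> hr; have S := sum_children hr.
rewrite (bigID (fun u => is_leaf par u)) /= big1 ?add0n in S; last first.
  by move=> u /eqP ->; rewrite cards0.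
have E : \sum_(u | ~~ is_leaf par u) #|children par u| =
   \sum_(u | ~~ is_leaf par u) (#|children par u|).-1 + \sum_(u | ~~ is_leaf par u) 1.
  rewrite -big_split; apply: eq_bigr => u hu.
  by rewrite /= addn1 prednK // card_gt0.
have G : \sum_(u | ~~ is_leaf par u) 1 + \sum_(u | ~~ is_leaf par u) 1 <=
   \sum_(u | ~~ is_leaf par u) #|children par u|.
  rewrite -big_split; apply: leq_sum => u hu.
  have := pt_no_outdeg1 u; have : 0 < #|children par u| by rewrite card_gt0.
  move=> a b; rewrite /=; lia.
have [_ I] := card_leaves_internal; have := n_le_V.
move: E G S; rewrite I; set N := #|V|; set N' := card _ in I *; have eN : N' = N by []; lia.
Qed.


Local Notation lab := (pt_lab T).
Local Notation ht := (height par).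

Definition BB := #|V| + n + 2.
Definition TOP := BB ^ BB.

Lemma bigmin_le_seq (r : seq V) (P : pred V) (F : V -> nat) c :
  c \in r -> P c -> \big[minn/TOP]_(i <- r | P i) F i <= F c.
Proof.
elim: r => // x r IHr; rewrite inE big_cons => /orP[/eqP <-|cr] Pc.
  by rewrite Pc geq_minl.
by case: (P x); [apply: leq_trans (geq_minr _ _) _|]; apply: IHr.
Qed.

Lemma bigmin_le (A : {set V}) (F : V -> nat) c :
  c \in A -> \big[minn/TOP]_(i in A) F i <= F c.
Proof. by move=> cA; apply: bigmin_le_seq; rewrite ?mem_index_enum. Qed.

Lemma bigmin_att (A : {set V}) (F : V -> nat) c0 :
  c0 \in A -> (forall c, c \in A -> F c <= TOP) ->
  exists2 c, c \in A & \big[minn/TOP]_(i in A) F i = F c.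
Proof.
move=> c0A hF.
have : (\big[minn/TOP]_(i in A) F i == TOP) ||
       [exists c in A, \big[minn/TOP]_(i in A) F i == F c].
  elim/big_ind: _ => [|x y hx hy|i iA]; first by rewrite eqxx.
    by rewrite /minn; case: ifP.
  by apply/orP; right; apply/existsP; exists i; rewrite iA eqxx.
case/orP => [/eqP e|/existsP[c /andP[cA /eqP e]]]; last by exists c.
exists c0 => //; apply/eqP; rewrite eqn_leq bigmin_le // e hF //.
Qed.

Fixpoint Kf (f : nat) (v : V) : nat :=
  if f is f'.+1 then
    (if is_leaf par v then lab v
     else ht v * BB ^ ht v + \big[minn/TOP]_(c in children par v) Kf f' c)
  else 0.

Lemma KfS f v : Kf f.+1 v = if is_leaf par v then lab v
     else ht v * BB ^ ht v + \big[minn/TOP]_(c in children par v) Kf f c.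
Proof. by []. Qed.

Lemma child_par c u : c \in children par u -> par c = Some u.
Proof. by rewrite inE => /eqP. Qed.

Lemma Kf_stable f v : ht v < f -> Kf f.+1 v = Kf f v.
Proof.
elim: f v => [//|f IH] v hv; rewrite KfS [Kf f.+1 v]KfS.
case: (is_leaf par v) => //; congr (_ + _); apply: eq_bigr => c cin.
apply: IH; have := height_child (child_par cin); move: hv; lia.
Qed.

Lemma ht_lt_BB v : ht v < BB.
Proof. have := hgt_le #|V| v; rewrite /BB /height; lia. Qed.

Definition K v := Kf BB v.

Lemma K_rec v : K v = if is_leaf par v then lab v
     else ht v * BB ^ ht v + \big[minn/TOP]_(c in children par v) K c.
Proof. by rewrite /K -Kf_stable ?ht_lt_BB // KfS. Qed.

Lemma leaf_ht0 v : is_leaf par v = (ht v == 0).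
Proof.
case: (boolP (is_leaf par v)) => h; first by rewrite height_leaf.
by have := height_internal h; case: (ht v).
Qed.

Lemma K_bound v : K v < BB ^ (ht v).+1 /\ (~~ is_leaf par v -> BB ^ ht v <= K v).
Proof.
have [m] := ubnP (ht v); elim: m v => [//|m IH] v hv.
rewrite K_rec; case: (boolP (is_leaf par v)) => lv.
  rewrite (height_leaf lv) expn1; split => //.
  by have := pt_lab_range lv; rewrite /BB; lia.
have /set0Pn [c0 c0in] := lv.
have hc0 := height_child (child_par c0in).
have [IH1 _] := IH c0 (leq_trans hc0 hv).
have M1 := bigmin_le (fun c => K c) c0in.
have P1 : BB ^ (ht c0).+1 <= BB ^ ht v.
  by apply: leq_pexp2l; [rewrite /BB; lia | ].
have h1 := height_internal lv; have h2 := ht_lt_BB v.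
move: M1 P1 IH1 h1 h2.
set M := \big[minn/TOP]_(c in children par v) K c.
set X := BB ^ ht v; set Y := BB ^ (ht c0).+1.
rewrite expnS => M1 P1 IH1 h1 h2; split; last by move=> _; nia.
nia.
Qed.

Lemma K_le_TOP v : K v <= TOP.
Proof.
have [h _] := K_bound v; apply: ltnW (leq_trans h _).
by apply: leq_pexp2l; [rewrite /BB; lia | exact: ht_lt_BB].
Qed.

Lemma K_lt_ht u v : ht u < ht v -> K u < K v.
Proof.
move=> h; have [hu _] := K_bound u; have [_ hv] := K_bound v.
have lv : ~~ is_leaf par v by rewrite leaf_ht0 -lt0n (leq_ltn_trans _ h).
apply: (leq_trans hu); apply: leq_trans (hv lv).
by apply: leq_pexp2l; [rewrite /BB; lia | ].
Qed.

Lemma K_inj : injective K.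
Proof.
move=> u v; have [m] := ubnP (ht u); elim: m u v => [//|m IH] u v hu e.
have ehv : ht u = ht v.
  by case: (ltngtP (ht u) (ht v)) => // h; have := K_lt_ht h; rewrite e ltnn.
move: e; rewrite !K_rec.
case: (boolP (is_leaf par u)) => lu.
  have lv : is_leaf par v by rewrite leaf_ht0 -ehv -leaf_ht0.
  by rewrite lv => /(pt_lab_inj lu lv).
have lv : ~~ is_leaf par v by rewrite leaf_ht0 -ehv -leaf_ht0.
rewrite (negPf lv) ehv => /addnI.
have /set0Pn [cu0 cu0in] := lu; have /set0Pn [cv0 cv0in] := lv.
have [cu cuin ->] := bigmin_att (F:=fun c => K c) cu0in (fun c _ => K_le_TOP c).
have [cv cvin ->] := bigmin_att (F:=fun c => K c) cv0in (fun c _ => K_le_TOP c).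
move=> ecv.
have pu := child_par cuin; have pv := child_par cvin.
have hcu := height_child pu.
have ecucv : cu = cv by apply: (IH _ _ _ ecv); apply: leq_trans hcu _.
by move: pu; rewrite ecucv pv => -[].
Qed.


Definition rk v := #|[set w | K w < K v]|.+1.

Lemma rk_le u v : K u <= K v -> rk u <= rk v.
Proof.
move=> h; rewrite ltnS; apply: subset_leq_card; apply/subsetP => w.
by rewrite !inE => /leq_trans; apply.
Qed.

Lemma rk_lt u v : K u < K v -> rk u < rk v.
Proof.
move=> h; rewrite ltnS (cardsD1 u [set w | K w < K v]) inE h add1n ltnS.
apply: subset_leq_card; apply/subsetP => w; rewrite !inE => hw.
rewrite (leq_trans hw (ltnW h)) andbT; apply/eqP => ewu.
by move: hw; rewrite ewu ltnn.
Qed.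

Lemma rk_mono u v : rk u < rk v -> K u < K v.
Proof. by rewrite ltnNge => /negP h; rewrite ltnNge; apply/negP => /rk_le. Qed.

Lemma rk_range v : 1 <= rk v <= #|V|.
Proof.
rewrite /rk; apply/andP; split => //.
have : #|[set w | K w < K v]| <= #|[set~ v]|.
  apply: subset_leq_card; apply/subsetP => w; rewrite !inE => hw.
  by apply/eqP => ewv; move: hw; rewrite ewv ltnn.
rewrite cardsC1 => h; apply: leq_ltn_trans h _.
by rewrite prednK // card_V_gt0.
Qed.

Lemma rk_inj : injective rk.
Proof.
move=> u v e; apply: K_inj.
by case: (ltngtP (K u) (K v)) => // h; [have := rk_lt h | have := rk_lt h];
  rewrite e ltnn.
Qed.

Lemma leaf_K v : is_leaf par v -> K v = lab v.
Proof. by move=> lv; rewrite K_rec lv. Qed.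

Lemma internal_K_big v : ~~ is_leaf par v -> n < K v.
Proof.
move=> lv; have [_ h] := K_bound v; apply: leq_trans (h lv).
have := height_internal lv; case: (ht v) => // k _.
rewrite expnS; have : 0 < BB ^ k by rewrite expn_gt0 /BB; lia.
move: (BB ^ k) => X; rewrite /BB; nia.
Qed.

Lemma uniq_card_bound (A : {set V}) a b :
  (forall w, w \in A -> is_leaf par w /\ a <= lab w < a + b) -> #|A| <= b.
Proof.
move=> hA; rewrite cardE -(size_map lab) -(size_iota a b).
apply: uniq_leq_size.
  rewrite map_inj_in_uniq ?enum_uniq // => x y; rewrite !mem_enum => xA yA.
  by apply: pt_lab_inj; [case: (hA x xA) | case: (hA y yA)].
move=> x /mapP [w]; rewrite mem_enum => wA ->.
by rewrite mem_iota; case: (hA w wA).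
Qed.

Lemma rk_leaf v : is_leaf par v -> rk v = lab v.
Proof.
move=> lv; have := pt_lab_range lv => /andP[l1 l2].
set A := [set w | K w < K v].
have eA : A = [set w | is_leaf par w && (lab w < lab v)].
  apply/setP => w; rewrite !inE (leaf_K lv).
  case: (boolP (is_leaf par w)) => lw; first by rewrite (leaf_K lw).
  apply/negbTE; rewrite -leqNgt; have := internal_K_big lw; lia.
set C := [set w | is_leaf par w && (lab v < lab w)].
have cA : #|A| <= (lab v).-1.
  apply: (@uniq_card_bound _ 1); move=> w; rewrite eA inE => /andP[lw h].
  split=> //; have := pt_lab_range lw; lia.
have cC : #|C| <= n - lab v.
  apply: (@uniq_card_bound _ (lab v).+1); move=> w; rewrite inE => /andP[lw h].
  split=> //; have := pt_lab_range lw; lia.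
have tot : \sum_(w | is_leaf par w) 1 = #|A| + 1 + #|C|.
  have -> : \sum_(w | is_leaf par w) 1 =
     \sum_(w | is_leaf par w) ((lab w < lab v) + (w == v) + (lab v < lab w) : nat).
    apply: eq_bigr => w lw.
    case: (ltngtP (lab w) (lab v)) => h; rewrite ?addn0 ?add0n.
    - by have -> : (w == v) = false by apply/negP => /eqP ewv; move: h; rewrite ewv ltnn.
    - by have -> : (w == v) = false by apply/negP => /eqP ewv; move: h; rewrite ewv ltnn.
    - by rewrite (pt_lab_inj lw lv h) eqxx.
  rewrite !big_split /=; congr (_ + _ + _).
  - rewrite eA -sum1dep_card [RHS]big_mkcondr /=; apply: eq_bigr => w _.
    by case: (_ < _).
  - rewrite (bigD1 v) //= eqxx big1 // => w /andP[_ /negPf ->] //.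
  - rewrite -sum1dep_card [RHS]big_mkcondr /=; apply: eq_bigr => w _.
    by case: (_ < _).
have [h1 _] := card_leaves_internal.
rewrite /rk -/A; move: tot; rewrite h1; lia.
Qed.

Lemma rk_bottom_up : is_bottom_up T rk.
Proof.
split.
- exact: rk_inj.
- exact: rk_range.
- exact: rk_leaf.
- by move=> u v h; apply: rk_lt; apply: K_lt_ht.
move=> u v hu ehv [x xin hx].
have lu : ~~ is_leaf par u by rewrite leaf_ht0 -lt0n.
have lv : ~~ is_leaf par v by rewrite leaf_ht0 -ehv -lt0n.
apply: rk_lt; rewrite !K_rec (negPf lu) (negPf lv) ehv ltn_add2l.
have /set0Pn [cv0 cv0in] := lv.
have [cv cvin ->] := bigmin_att (F:=fun c => K c) cv0in (fun c _ => K_le_TOP c).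
apply: leq_ltn_trans (bigmin_le (fun c => K c) xin) _.
exact: rk_mono (hx _ cvin).
Qed.

Lemma bottom_up_spec : is_bottom_up T (bottom_up T).
Proof. by apply: epsilon_spec; exists rk; apply: rk_bottom_up. Qed.

End Height.

Section Cyc.
Variable X : finType.

Lemma next_cons2 (x y : X) t z : uniq [:: x, y & t] ->
  next [:: x, y & t] z = tperm x y (next (y :: t) z).
Proof.
move=> U; have [xy xt yt Ut] : [/\ x != y, x \notin t, y \notin t & uniq t].
  by move: (U) => /= /andP[]; rewrite inE negb_or => /andP[-> ->] /andP[-> ->].
rewrite !next_nth.
have [->|zx] := eqVneq z x.
  by rewrite mem_head /= eqxx inE (negPf xy) (negPf xt) tpermL.
case: (boolP (z \in y :: t)) => zin; last first.
  rewrite inE (negPf zx) /= (negPf zin) tpermD //; first by rewrite eq_sym.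
  by apply/eqP => yz; move: zin; rewrite yz mem_head.
have -> : z \in [:: x, y & t] by rewrite inE zin orbT.
have zx' : (x == z) = false by rewrite eq_sym (negPf zx).
rewrite /= zx' /=.
have := zin; rewrite inE; case: eqP => [-> _|zy /= zt].
  rewrite eqxx /=.
  case: t xt yt U Ut zin => [|w t'] xt yt U Ut zin /=; first by rewrite tpermR.
  rewrite tpermD //; first by apply/eqP => e; move: xt; rewrite -e mem_head.
  by apply/eqP => e; move: yt; rewrite -e mem_head.
have -> : (y == z) = false by apply/eqP => e; apply: zy; rewrite e.
case: (ltnP (index z t).+1 (size t)) => ilt.
  rewrite (set_nth_default y x ilt) tpermD //.
    by apply/eqP => e; move: xt; rewrite e mem_nth.
  by apply/eqP => e; move: yt; rewrite e mem_nth.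
by rewrite !nth_default // tpermR.
Qed.

Lemma odd_cycle (s : seq X) (Us : uniq s) :
  odd_perm (perm (can_inj (prev_next Us))) = odd (size s).-1.
Proof.
elim: s Us => [|x [|y t] IH] Us.
- have -> : perm (can_inj (prev_next Us)) = 1%g by apply/permP => z; rewrite permE perm1.
  by rewrite odd_perm1.
- have -> : perm (can_inj (prev_next Us)) = 1%g.
    apply/permP => z; rewrite permE perm1 next_nth; case: ifP => //=.
    by rewrite nth_nil inE => /eqP ->.
  by rewrite odd_perm1.
have Us' : uniq (y :: t) by case/andP: Us.
have -> : perm (can_inj (prev_next Us)) = (perm (can_inj (prev_next Us')) * tperm x y)%g.
  by apply/permP => z; rewrite permM !permE next_cons2 // permE.
rewrite odd_permM IH odd_tperm.
have xy : x != y by move: Us; rewrite /= inE negb_or => /andP[/andP[]].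
by rewrite xy /=; case: (size t) => //= k; rewrite addbT.
Qed.

End Cyc.

Lemma odd_kappa N (S : {set 'I_N}) : odd_perm (kappa S) = odd (#|S|).-1.
Proof. by rewrite /kappa odd_cycle /kappa_seq size_sort cardE. Qed.

Local Open Scope group_scope.
Lemma tperm_decomp (X : finType) (s : {perm X}) :
  exists2 ts : seq (X * X), all dpair ts &
    (s = \prod_(t <- ts) tperm t.1 t.2)%g /\ size ts <= #|[pred x | s x != x]|.-1.
Proof.
have [m] := ubnP #|[pred x | s x != x]|; elim: m s => // m IHm s /ltnSE-le_s_m.
case: (pickP (fun x => s x != x)) => [x s_x | s_id]; last first.
  exists nil; rewrite // big_nil; split => //; apply/permP=> x.
  by apply/eqP/idPn; rewrite perm1 s_id.
set s' := (tperm x (s^-1 x) * s)%g.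
have sub : [pred y | s' y != y] \subset [predD1 [pred y | s y != y] & x].
  apply/subsetP=> y; rewrite !inE permM permE /= -(canF_eq (permK _)).
  have [-> | ne_yx] := eqVneq y x; first by rewrite permKV eqxx.
  by case: (s y =P x) => // -> _; rewrite eq_sym.
have c1 := subset_leq_card sub.
have ca := cardD1 x [pred y | s y != y]; rewrite !inE s_x in ca.
have xx : x != s^-1 x by apply/eqP => e; move: s_x; rewrite {1}e permKV eqxx.
have c2 : 2 <= #|[pred y | s y != y]|.
  have := cards2 x (s^-1 x); rewrite xx => <-.
  apply: subset_leq_card; apply/subsetP => y; rewrite !inE.
  by case/orP => /eqP ->; rewrite ?permKV // eq_sym.
have [|ts dts [def_s sz]] := IHm s'.
  by apply: (leq_ltn_trans c1); move: le_s_m; rewrite ca /= add1n.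
exists ((x, s^-1 x) :: ts); first by rewrite /= xx.
split; first by rewrite big_cons -def_s /s' mulgA tperm2 mul1g.
move: sz c1 c2; rewrite ca /= add0n => a b c; apply: (leq_ltn_trans a).
have b2 : #|[pred x0 | s' x0 != x0]| <= #|[predD1 [pred y | s y != y] & x]| := b.
move: b2 c; move: (#|[pred x0 | s' x0 != x0]|) (#|[predD1 [pred y | s y != y] & x]|) => k D; lia.
Qed.

Local Close Scope group_scope.
Lemma min_transp_spec N (s : {perm 'I_N}) :
  is_prod_transp s (min_transp s) /\ forall k, is_prod_transp s k -> min_transp s <= k.
Proof. by rewrite /min_transp; case: ex_minnP => k H1 H2; split. Qed.

Lemma ipt_odd N (s : {perm 'I_N}) k : is_prod_transp s k -> odd k = odd_perm s.
Proof.
case/existsP => ts /andP[dts /eqP ->].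
by rewrite odd_perm_prod // size_tuple.
Qed.

Lemma min_transp_bound N (s : {perm 'I_N}) : min_transp s <= N.-1.
Proof.
have [ts dts [def_s sz]] := tperm_decomp s.
have [_ M] := min_transp_spec s.
have : is_prod_transp s (size ts).
  apply/existsP; exists (in_tuple ts); by rewrite dts -def_s eqxx.
move/M => h; apply: (leq_trans h); apply: (leq_trans sz).
have := max_card (mem [pred x | s x != x]); rewrite card_ord => h2.
by rewrite -!subn1 leq_sub2r.
Qed.

Section Final.
Variables (n : nat) (T : phylo_tree n).
Local Notation V := (pt_V T).
Local Notation par := (pt_par T).

Lemma child_labels_card (hn : 2 <= n) u :
  #|child_labels T u| = #|children par u|.
Proof.
have [r hr] := pt_root T.
have [_ hV] := sum_internal hr.
have [linj lrange lleaf lht lc] := bottom_up_spec T.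
have hN : 0 < 2 * n - 2 by lia.
pose j0 := Ordinal hN.
pose f c := insubd j0 (bottom_up T c).-1 : 'I_(2 * n - 2).
have lb : forall c, c \in children par u ->
    1 <= bottom_up T c /\ (bottom_up T c).-1 < 2 * n - 2.
  move=> c cin; have pc := child_par cin.
  have cr : c != r by apply/eqP => e; have := proj2 (hr c) e; rewrite pc.
  have h1 := lht _ _ (height_root hr cr).
  have := lrange r; have := lrange c; move: h1 hV; lia.
have fv : forall c, c \in children par u -> val (f c) = (bottom_up T c).-1.
  by move=> c cin; rewrite /f val_insubd; case: (lb c cin) => _ ->.
have -> : child_labels T u = f @: children par u.
  apply/setP => j; rewrite inE; apply/existsP/imsetP =>
    [[c /andP[cin /eqP e]]|[c cin ->]].
    by exists c => //; apply: val_inj; rewrite fv // e.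
  exists c; rewrite cin /=; apply/eqP; rewrite fv //.
  by case: (lb c cin) => h _; rewrite prednK.
rewrite card_in_imset // => c c' cin c'in e; apply: linj.
have := congr1 val e; rewrite !fv //.
by case: (lb c cin) => h _; case: (lb c' c'in) => h' _; lia.
Qed.

Lemma odd_matching (hn : 2 <= n) : odd_perm (matching_perm T) = odd n.-1.
Proof.
have [r hr] := pt_root T.
rewrite /matching_perm (big_morph (@odd_perm _) (@odd_permM _) (@odd_perm1 _)).
under eq_bigr => u hu do rewrite odd_kappa child_labels_card //.
rewrite -(big_morph odd oddD (erefl false : odd 0 = false)).
by rewrite (proj1 (sum_internal hr)).
Qed.

End Final.

Theorem proposition2 (n : nat) (T1 T2 : phylo_tree n) :
  2 <= n -> ~~ odd (TD' T1 T2) /\ TD' T1 T2 < 2 * n - 2.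
Proof.
move=> hn; rewrite /TD'.
set s := (matching_perm T1 * (matching_perm T2)^-1)%g.
have [P _] := min_transp_spec s.
split.
  by rewrite (ipt_odd P) /s odd_permM odd_permV !odd_matching // addbb.
have := min_transp_bound s; lia.
Qed.
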